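(* Let $r>0$, $p\in(0,1)$ and let $\boldsymbol{\mu}=(\mu_s)_{s\ge1}$ be the zero-truncated negative binomial distribution $\mu_s=\gamma\,\dfrac{\Gamma(s+r)\,p^s}{\Gamma(r)\,s!}$, $s\ge1$, with $\gamma=\dfrac{(1-p)^r}{1-(1-p)^r}$. Let $\Pi_n\sim ESC_{[n]}(\boldsymbol{\mu})$ with allocation variables $\mathbf{z}$. For $i\in[n]$, with $K_{-i}$ the number of clusters of $\mathbf{z}_{-i}$ and $S_j$ the size of cluster $j$ in $\mathbf{z}_{-i}$, $$\mathbb{P}(z_i=j\mid\mathbf{z}_{-i})\propto\begin{cases}S_j+r, & j=1,\dots,K_{-i},\\ (K_{-i}+1)\,\gamma\, r, & j=K_{-i}+1\ \text{(new cluster)}.\end{cases}$$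
   Context: For a fixed distribution $\boldsymbol{\mu}$ on the positive integers with $\mu_1>0$, $ESC_{[n]}(\boldsymbol{\mu})$ is the law of the following random partition of $[n]$: let $S_1,S_2,\dots$ be i.i.d. with law $\boldsymbol{\mu}$, condition on the event that $\sum_{j=1}^k S_j=n$ for some $k$, let $K$ be that $k$, and let $(z_1,\dots,z_n)$ be a uniformly random permutation of the vector with $S_1$ copies of $1$, ..., $S_K$ copies of $K$; the partition has blocks $\{i:z_i=j\}$. $\mathbf{z}_{-i}$ denotes the allocations of all points other than $i$; the statement concerns which cluster of $\mathbf{z}_{-i}$ point $i$ joins, or whether it forms a new cluster, with proportionality constant independent of $j$. *)

(* Defs.v *)
From HB Require Import structures.
From mathcomp Require Import all_boot all_order all_algebra.
From mathcomp Require Import reals exp.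
Set Implicit Arguments. Unset Strict Implicit. Unset Printing Implicit Defensive.
Import Order.TTheory GRing.Theory Num.Theory.
Local Open Scope ring_scope.

(* Allocations of the points [n] = 'I_n to cluster labels.  Labels are
   0-based: label l here is label l+1 of the paper. *)
Definition alloc (n : nat) := {ffun 'I_n -> 'I_n}.

Definition nclus n (z : alloc n) : nat := #|[set z x | x : 'I_n]|.

Definition csize n (z : alloc n) (l : nat) : nat := #|[set x | (z x : nat) == l]|.

Definition valid_alloc n (z : alloc n) : bool :=
  [forall l : 'I_n, (l \in [set z x | x : 'I_n]) == ((l : nat) < nclus z)%N].

(* Unnormalized ESC weight of an allocation z with K clusters of sizes
   s_1..s_K:  P(K, S_1=s_1,...,S_K=s_K) * P(uniform permutation = z | S)
   = (prod_j mu_{s_j}) * (prod_j s_j!) / n!. *)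
Definition esc_weight (R : realType) (mu : nat -> R) n (z : alloc n) : R :=
  if valid_alloc z then
    (\prod_(l < n | (l < nclus z)%N) (mu (csize z l) * (csize z l)`!%:R))
      / n`!%:R
  else 0.

(* The ESC_[n](mu) law: conditioning on the event "some partial sum equals n"
   = normalizing by its total mass. *)
Definition esc_pmf (R : realType) (mu : nat -> R) n (z : alloc n) : R :=
  esc_weight mu z / \sum_(z' : alloc n) esc_weight mu z'.

Definition esc_prob (R : realType) (mu : nat -> R) n (E : pred (alloc n)) : R :=
  \sum_(z : alloc n | E z) esc_pmf mu z.

Definition singleton_at n (i : 'I_n) (z : alloc n) : bool :=
  csize z (z i) == 1%N.

(* Allocation z_{-i} of the points other than i, with labels made consecutive
   (if i was a singleton with label l, labels above l are shifted down). *)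
Definition zminus n (i : 'I_n) (z : alloc n) (x : 'I_n) : nat :=
  if singleton_at i z then
    (if (z i < z x)%N then (z x).-1 else z x)
  else z x.

(* Cluster of z_{-i} joined by point i: its label if it joins an existing
   cluster, and K_{-i} (0-based index of the "new cluster" K_{-i}+1) if
   it forms a new cluster. *)
Definition zi_cluster n (i : 'I_n) (z : alloc n) : nat :=
  if singleton_at i z then (nclus z).-1 else z i.

Definition zminus_is n (i : 'I_n) (w : 'I_n -> nat) : pred (alloc n) :=
  fun z => [forall x : 'I_n, (x != i) ==> (zminus i z x == w x)].

Definition Kminus n (i : 'I_n) (w : 'I_n -> nat) : nat :=
  size (undup [seq w x | x <- enum 'I_n & x != i]).

Definition Sminus n (i : 'I_n) (w : 'I_n -> nat) (j : nat) : nat :=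
  #|[set x | (x != i) && (w x == j)]|.

(* rising factorial r (r+1) ... (r+s-1) = Gamma(s+r)/Gamma(r) *)
Definition rising (R : realType) (r : R) (s : nat) : R :=
  \prod_(k < s) (r + k%:R).

Definition nb_gamma (R : realType) (r p : R) : R :=
  (1 - p) `^ r / (1 - (1 - p) `^ r).

Definition ztnb (R : realType) (r p : R) (s : nat) : R :=
  if s == 0%N then 0 else nb_gamma r p * rising r s * p ^+ s / s`!%:R.

(* Main.v *)
Require Import Defs.
From HB Require Import structures.
From mathcomp Require Import all_boot all_order all_algebra.
From mathcomp Require Import reals exp.
From mathcomp Require Import zify ring.
Set Implicit Arguments. Unset Strict Implicit. Unset Printing Implicit Defensive.
Import Order.TTheory GRing.Theory Num.Theory.


Section Comb.
Variables (n : nat) (i : 'I_n) (w : 'I_n -> nat).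

Definition Lw (l : nat) := [exists x, (x != i) && (w x == l)].

Lemma nclus_le (z : alloc n) : (nclus z <= n)%N.
Proof. by rewrite /nclus -[X in (_ <= X)%N]card_ord max_card. Qed.

Lemma valid_img (z : alloc n) : valid_alloc z ->
  forall l : 'I_n, (l \in [set z x | x : 'I_n]) = (l < nclus z)%N.
Proof. by move=> /forallP H l; apply/eqP/H. Qed.

Lemma valid_ex (z : alloc n) l : valid_alloc z -> (l < nclus z)%N ->
  exists y, (z y : nat) = l.
Proof.
move=> vz lt; have ln : (l < n)%N by exact: leq_trans lt (nclus_le z).
have : Ordinal ln \in [set z x | x : 'I_n] by rewrite valid_img.
by case/imsetP=> y _ Ey; exists y; rewrite -Ey.
Qed.

Lemma valid_lt (z : alloc n) x : valid_alloc z -> (z x < nclus z)%N.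
Proof. by move=> vz; rewrite -valid_img // imset_f. Qed.

Lemma card_lt N : (N <= n)%N -> #|[set l : 'I_n | (l < N)%N]| = N.
Proof.
move=> Nn.
have -> : [set l : 'I_n | (l < N)%N] = [set widen_ord Nn l | l : 'I_N].
  apply/setP=> l; rewrite inE; apply/idP/imsetP.
    by move=> lN; exists (Ordinal lN) => //; apply: val_inj.
  by case=> k _ ->; rewrite /= ltn_ord.
by rewrite card_imset ?card_ord //; by move=> a b [] /val_inj.
Qed.

Lemma img_valid (z : alloc n) N : (N <= n)%N ->
  (forall l : 'I_n, (l \in [set z x | x : 'I_n]) = (l < N)%N) ->
  nclus z = N /\ valid_alloc z.
Proof.
move=> Nn H.
have e : nclus z = N.
  rewrite /nclus -[RHS](card_lt Nn); apply: eq_card => l; by rewrite H inE.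
split=> //; apply/forallP=> l; by rewrite H e.
Qed.

Lemma Kminus_char N : (forall l, Lw l = (l < N)%N) -> Kminus i w = N.
Proof.
move=> H; rewrite /Kminus.
set s := [seq w x | x <- enum 'I_n & x != i].
have ms : forall l, (l \in s) = (l < N)%N.
  move=> l; rewrite -H; apply/mapP/existsP.
    by case=> x; rewrite mem_filter => /andP[xi _] ->; exists x; rewrite xi eqxx.
  by case=> x /andP[xi /eqP <-]; exists x => //; rewrite mem_filter xi mem_enum.
rewrite -(size_iota 0 N); apply: perm_size; apply: uniq_perm.
- exact: undup_uniq.
- exact: iota_uniq.
by move=> l; rewrite mem_undup ms mem_iota.
Qed.

Lemma Kminus_lt : (Kminus i w < n)%N.
Proof.
rewrite /Kminus; apply: (@leq_ltn_trans (size [seq w x | x <- enum 'I_n & x != i])).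
  by rewrite size_undup.
rewrite size_map size_filter.
have := count_predC (pred1 i) (enum 'I_n).
rewrite size_enum_ord count_uniq_mem ?enum_uniq // mem_enum.
have -> : count (predC (pred1 i)) (enum 'I_n) = count (fun x => x != i) (enum 'I_n) by [].
have := ltn_ord i; rewrite (_ : (i \in _) = true) //; lia.
Qed.

Lemma nonsing_props (z : alloc n) : valid_alloc z -> zminus_is i w z ->
  ~~ singleton_at i z ->
  (forall x, x != i -> (z x : nat) = w x) /\ (forall l, Lw l = (l < nclus z)%N).
Proof.
move=> vz /forallP Bz ns.
have Ez x : x != i -> (z x : nat) = w x.
  move=> xi; have := Bz x; rewrite xi /= /zminus (negbTE ns).
  by move/eqP.
split=> // l; apply/existsP/idP.
  by case=> x /andP[xi /eqP <-]; rewrite -(Ez x xi) valid_lt.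
move=> lt; case: (valid_ex vz lt) => y Ey.
case: (eqVneq y i) => [yi | yi]; last first.
  by exists y; rewrite yi -(Ez y yi) Ey eqxx.
subst y.
set A := [set x | (z x : nat) == z i].
have iA : i \in A by rewrite inE.
have : (0 < #|A :\ i|)%N.
  move: ns; rewrite /singleton_at /csize -/A (cardsD1 i A) iA.
  by case: #|A :\ i|.
case/card_gt0P=> x; rewrite !inE => /andP[xi /eqP zx].
by exists x; rewrite xi -(Ez x xi) zx Ey eqxx.
Qed.

Lemma sing_props (z : alloc n) : valid_alloc z -> zminus_is i w z ->
  singleton_at i z ->
  [/\ (forall x, x != i -> (z x : nat) != z i),
      (forall x, x != i -> w x = if (z i < z x)%N then (z x).-1 else z x),
      (forall l, Lw l = (l < (nclus z).-1)%N) & (z i < nclus z)%N].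
Proof.
move=> vz /forallP Bz sg.
have Ez x : x != i -> w x = if (z i < z x)%N then (z x).-1 else z x.
  move=> xi; have := Bz x; rewrite xi /= /zminus sg.
  by move/eqP.
have Nz x : x != i -> (z x : nat) != z i.
  move=> xi; apply/negP => /eqP zx.
  move: sg; rewrite /singleton_at /csize => /cards1P [y Ay].
  have : i \in [set x | (z x : nat) == z i] by rewrite inE.
  have : x \in [set x | (z x : nat) == z i] by rewrite inE zx.
  rewrite Ay !inE => /eqP xy /eqP iy.
  by move: xi; rewrite xy iy eqxx.
have zin := valid_lt i vz.
split=> // l; apply/existsP/idP.
  case=> x /andP[xi /eqP <-]; rewrite (Ez x xi).
  have := Nz x xi; have := valid_lt x vz.
  case: ifP => h /=; lia.
move=> lt.
case: (ltnP l (z i)) => lm.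
  have lt' : (l < nclus z)%N by lia.
  case: (valid_ex vz lt') => y Ey.
  have yi : y != i by apply/eqP => yi; subst y; lia.
  exists y; rewrite yi (Ez y yi) Ey /=; apply/eqP; case: ifP => //; lia.
have lt' : (l.+1 < nclus z)%N by lia.
case: (valid_ex vz lt') => y Ey.
have yi : y != i by apply/eqP => yi; subst y; lia.
exists y; rewrite yi (Ez y yi) Ey /=; apply/eqP; case: ifP => //; lia.
Qed.

Lemma goodK (z : alloc n) : valid_alloc z -> zminus_is i w z ->
  forall l, Lw l = (l < Kminus i w)%N.
Proof.
move=> vz Bz.
case: (boolP (singleton_at i z)) => sg.
  case: (sing_props vz Bz sg) => _ _ H _.
  by rewrite (Kminus_char H).
case: (nonsing_props vz Bz sg) => _ H.
by rewrite (Kminus_char H).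
Qed.

End Comb.

Section Constr.
Variables (n : nat) (i : 'I_n) (w : 'I_n -> nat).
Hypothesis HK : forall l, Lw i w l = (l < Kminus i w)%N.
Local Notation K := (Kminus i w).

Lemma wK x : x != i -> (w x < K)%N.
Proof. by move=> xi; rewrite -HK; apply/existsP; exists x; rewrite xi eqxx. Qed.

Lemma Kn : (K < n)%N.
Proof. exact: Kminus_lt. Qed.

Lemma Spos l : (l < K)%N -> (0 < Sminus i w l)%N.
Proof.
rewrite -HK => /existsP [x xl]; apply/card_gt0P; exists x; by rewrite inE.
Qed.

Definition zJ (j : nat) : alloc n :=
  [ffun x => insubd i (if x == i then j else w x)].
Definition zM (m : nat) : alloc n :=
  [ffun x => insubd i (if x == i then m else if (m <= w x)%N then (w x).+1 else w x)].

Lemma zJ_val j : (j < K)%N -> forall x, (zJ j x : nat) = if x == i then j else w x.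
Proof.
move=> jK x; rewrite ffunE val_insubd; have := Kn.
case: eqP => [_|/eqP xi]; first by move=> h; rewrite ifT //; lia.
by have := wK xi => h1 h2; rewrite ifT //; lia.
Qed.

Lemma zM_val m : (m <= K)%N -> forall x, (zM m x : nat) =
   if x == i then m else if (m <= w x)%N then (w x).+1 else w x.
Proof.
move=> mK x; rewrite ffunE val_insubd; have := Kn.
case: eqP => [_|/eqP xi]; first by move=> h; rewrite ifT //; lia.
have := wK xi => h1 h2; case: (leqP m (w x)) => h3; rewrite ifT //; lia.
Qed.

Lemma csize_zJ j : (j < K)%N -> forall l,
  csize (zJ j) l = (Sminus i w l + (l == j))%N.
Proof.
move=> jK l; rewrite /csize (cardsD1 i) inE zJ_val // eqxx addnC; congr addn; last by rewrite eq_sym.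
apply: eq_card => x; rewrite !inE zJ_val //; by case: (x == i).
Qed.

Lemma csize_zM m : (m <= K)%N -> forall l,
  csize (zM m) l = if (l < m)%N then Sminus i w l
                   else if l == m then 1%N else Sminus i w l.-1.
Proof.
move=> mK l; rewrite /csize (cardsD1 i) inE zM_val // eqxx.
case: (ltngtP l m) => h.
- rewrite add0n; apply: eq_card => x; rewrite !inE zM_val //.
  case: (x == i) => //=; case: ifP => h1; apply/eqP/eqP; lia.
- rewrite add0n; apply: eq_card => x; rewrite !inE zM_val //.
  case: (x == i) => //=; case: ifP => h1; apply/eqP/eqP; lia.
- subst l; rewrite add1n; congr S; apply/eqP.
  rewrite cards_eq0; apply/eqP/setP => x; rewrite !inE zM_val //.
  case: (x == i) => //=; case: ifP => h1; apply/eqP; lia.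
Qed.

Lemma zJ_props j : (j < K)%N ->
  [/\ valid_alloc (zJ j), nclus (zJ j) = K, ~~ singleton_at i (zJ j),
      zminus_is i w (zJ j) & zi_cluster i (zJ j) = j].
Proof.
move=> jK.
have [e v] : nclus (zJ j) = K /\ valid_alloc (zJ j).
  apply: img_valid; first by have := Kn; lia.
  move=> l; apply/imsetP/idP.
    case=> x _ ->; rewrite zJ_val //; case: eqP => [//|/eqP xi]; exact: wK.
  rewrite -HK => /existsP [x /andP[xi /eqP wx]]; exists x => //.
  by apply: val_inj; rewrite /= zJ_val // (negbTE xi).
have ns : ~~ singleton_at i (zJ j).
  rewrite /singleton_at csize_zJ // zJ_val // eqxx eqxx addn1 eqSS.
  by have := Spos jK; case: (Sminus i w j).
split=> //.
  apply/forallP => x; apply/implyP => xi.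
  by rewrite /zminus (negbTE ns) zJ_val // (negbTE xi).
by rewrite /zi_cluster (negbTE ns) zJ_val // eqxx.
Qed.

Lemma zM_props m : (m <= K)%N ->
  [/\ valid_alloc (zM m), nclus (zM m) = K.+1, singleton_at i (zM m),
      zminus_is i w (zM m) & zi_cluster i (zM m) = K].
Proof.
move=> mK.
have [e v] : nclus (zM m) = K.+1 /\ valid_alloc (zM m).
  apply: img_valid; first by have := Kn; lia.
  move=> l; apply/imsetP/idP.
    case=> x _ ->; rewrite zM_val //; case: eqP => [_|/eqP xi]; first lia.
    have := wK xi; case: ifP => _; lia.
  move=> lK.
  case: (ltngtP l m) => h.
  - have : Lw i w l by rewrite HK; lia.
    case/existsP => x /andP[xi /eqP wx]; exists x => //.
    apply: val_inj; rewrite /= zM_val // (negbTE xi) wx ifF //; lia.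
  - have : Lw i w l.-1 by rewrite HK; lia.
    case/existsP => x /andP[xi /eqP wx]; exists x => //.
    apply: val_inj; rewrite /= zM_val // (negbTE xi) wx ifT //; lia.
  - by exists i => //; apply: val_inj; rewrite /= zM_val // eqxx.
have sg : singleton_at i (zM m).
  by rewrite /singleton_at csize_zM // zM_val // eqxx ltnn eqxx.
split=> //.
  apply/forallP => x; apply/implyP => xi.
  rewrite /zminus sg !zM_val // (negbTE xi) eqxx; have := wK xi.
  by case: (leqP m (w x)) => h1 h2; apply/eqP; case: ifP => h3; lia.
by rewrite /zi_cluster sg e.
Qed.

Lemma charJ (z : alloc n) : valid_alloc z -> zminus_is i w z ->
  ~~ singleton_at i z -> z = zJ (z i) /\ (z i < K)%N.
Proof.
move=> vz Bz ns; case: (nonsing_props vz Bz ns) => Ez H.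
have e : K = nclus z by exact: Kminus_char H.
have ziK : (z i < K)%N by rewrite e valid_lt.
split=> //; apply/ffunP => x; apply: val_inj => /=; rewrite zJ_val //.
by case: eqP => [->|/eqP xi] //; rewrite Ez.
Qed.

Lemma charM (z : alloc n) : valid_alloc z -> zminus_is i w z ->
  singleton_at i z -> z = zM (z i) /\ (z i <= K)%N.
Proof.
move=> vz Bz sg; case: (sing_props vz Bz sg) => Nz Ez H zin.
have e : K = (nclus z).-1 by exact: Kminus_char H.
have ziK : (z i <= K)%N by rewrite e; lia.
split=> //; apply/ffunP => x; apply: val_inj => /=; rewrite zM_val //.
case: eqP => [->|/eqP xi] //; rewrite Ez //; have := Nz x xi.
case: (ltnP (z i) (z x)) => h1 h2; case: ifP => h3; lia.
Qed.

End Constr.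
Local Open Scope ring_scope.

Section Weights.
Variables (R : realType) (r p : R).
Local Notation mu := (ztnb r p).
Definition G (s : nat) : R := mu s * s`!%:R.

Lemma G_pos_eq s : (0 < s)%N -> G s = nb_gamma r p * rising r s * p ^+ s.
Proof.
move=> s0; rewrite /G /ztnb ifF; last by case: s s0.
by rewrite divfK // pnatr_eq0 -lt0n fact_gt0.
Qed.

Lemma G_succ s : (0 < s)%N -> G s.+1 = G s * ((r + s%:R) * p).
Proof.
move=> s0; rewrite !G_pos_eq // /rising big_ord_recr /= exprS; ring.
Qed.

Lemma G1 : G 1 = nb_gamma r p * r * p.
Proof. by rewrite G_pos_eq // /rising big_ord1 addr0 expr1. Qed.

Lemma prod_conv n (F : nat -> R) N : (N <= n)%N ->
  \prod_(l < n | (l < N)%N) F l = \prod_(0 <= l < N) F l.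
Proof. by move=> Nn; rewrite (big_nat_widen _ _ _ _ _ Nn) big_mkord. Qed.

Lemma prod_single (c : R) j K : (j < K)%N ->
  \prod_(0 <= l < K) (if l == j then c else 1) = c.
Proof.
move=> jK; rewrite (@big_cat_nat _ _ _ j 0 K _ _ (leq0n j) (ltnW jK)) (@big_ltn _ _ _ j K _ jK) /= eqxx.
rewrite !big1_seq ?mul1r ?mulr1 //.
  move=> l; rewrite mem_index_iota => h; rewrite ifF //; apply/eqP; lia.
move=> l; rewrite mem_index_iota => h; rewrite ifF //; apply/eqP; lia.
Qed.

End Weights.

Section Sums.
Variables (R : realType) (r p : R) (hr : 0 < r) (hp0 : 0 < p).
Variables (n : nat) (i : 'I_n) (w : 'I_n -> nat).
Hypothesis HK : forall l, Lw i w l = (l < Kminus i w)%N.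
Local Notation K := (Kminus i w).
Local Notation mu := (ztnb r p).
Local Notation W := (esc_weight mu).
Local Notation S := (Sminus i w).

Definition Abase : R := (\prod_(0 <= l < K) G r p (S l)) / n`!%:R.

Lemma W_zJ j : (j < K)%N -> W (zJ i w j) = Abase * ((r + (S j)%:R) * p).
Proof.
move=> jK; case: (zJ_props HK jK) => v e _ _ _.
rewrite /esc_weight v e (prod_conv (fun l => G r p (csize (zJ i w j) l))); last by have := Kminus_lt i w; lia.
rewrite /Abase mulrAC; congr (_ / _).
rewrite -(prod_single ((r + (S j)%:R) * p) jK) -big_split /=.
apply: eq_big_nat => l /andP[_ lK]; rewrite (csize_zJ HK jK) -/(G r p _).
case: eqP => [->|_]; last by rewrite addn0 mulr1.
by rewrite addn1 G_succ // Spos.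
Qed.

Lemma W_zM m : (m <= K)%N -> W (zM i w m) = Abase * (nb_gamma r p * r * p).
Proof.
move=> mK; case: (zM_props HK mK) => v e _ _ _.
rewrite /esc_weight v e (prod_conv (fun l => G r p (csize (zM i w m) l))); last by have := Kminus_lt i w; lia.
rewrite /Abase mulrAC; congr (_ / _).
rewrite (@big_cat_nat _ _ _ m 0 K.+1 _ _ (leq0n m) (leqW mK)).
rewrite (@big_ltn _ _ _ m K.+1 _ (mK)) /=.
rewrite (@big_cat_nat _ _ _ m 0 K _ _ (leq0n m) mK).
rewrite big_add1 /= -G1.
have -> : \prod_(0 <= i0 < m) G r p (csize (zM i w m) i0) = \prod_(0 <= l < m) G r p (S l).
  apply: eq_big_nat => l /andP[_ lm]; by rewrite (csize_zM HK mK) lm.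
have -> : \prod_(m <= i0 < K) G r p (csize (zM i w m) i0.+1) = \prod_(m <= l < K) G r p (S l).
  apply: eq_big_nat => l /andP[ml _]; rewrite (csize_zM HK mK) ifF; last lia.
  by rewrite ifF //; apply/eqP; lia.
rewrite (csize_zM HK mK) ltnn eqxx; ring.
Qed.

End Sums.

Section Main.
Variables (R : realType) (r p : R) (hr : 0 < r) (hp0 : 0 < p).
Variables (n : nat) (i : 'I_n) (w : 'I_n -> nat).
Local Notation K := (Kminus i w).
Local Notation mu := (ztnb r p).
Local Notation W := (esc_weight mu).
Local Notation S := (Sminus i w).

Lemma sum_valid (E : pred (alloc n)) :
  \sum_(z | E z) W z = \sum_(z | valid_alloc z && E z) W z.
Proof.
rewrite (bigID (@valid_alloc n)) /= addrC big1 ?add0r.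
  by apply: eq_bigl => z; rewrite andbC.
by move=> z /andP[_ /negbTE nv]; rewrite /esc_weight nv.
Qed.

Lemma probE (E : pred (alloc n)) :
  esc_prob mu E = (\sum_(z | E z) W z) / \sum_(z' : alloc n) W z'.
Proof. by rewrite /esc_prob /esc_pmf -mulr_suml. Qed.

Hypothesis HK : forall l, Lw i w l = (l < K)%N.

Lemma zi_val (z : alloc n) : valid_alloc z -> zminus_is i w z ->
  zi_cluster i z = if singleton_at i z then K else z i.
Proof.
move=> vz Bz; case: (boolP (singleton_at i z)) => sg.
  case: (charM HK vz Bz sg) => ez zK.
  case: (zM_props HK zK) => _ e _ _ _.
  by rewrite /zi_cluster sg ez e.
by rewrite /zi_cluster (negbTE sg).
Qed.

Lemma main_sum j :
  \sum_(z | zminus_is i w z && (zi_cluster i z == j)) W z =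
  Abase r p i w * p *
   (if (j < K)%N then (S j)%:R + r
    else if j == K then (K.+1)%:R * nb_gamma r p * r else 0).
Proof.
rewrite sum_valid.
case: ltnP => jK.
  rewrite (big_pred1 (zJ i w j)); first by rewrite (W_zJ hr hp0 HK jK); ring.
  move=> z /=; apply/idP/eqP.
    case/and3P => vz Bz /eqP; rewrite zi_val //.
    case: ifP => sg; first by move=> e; move: jK; rewrite e ltnn.
    move=> zij; case: (charJ HK vz Bz (negbT sg)) => ez _.
    by rewrite ez zij.
  move=> ->; case: (zJ_props HK jK) => v _ _ b e.
  by rewrite v b e eqxx.
case: eqP => [jE | jE]; last first.
  rewrite mulr0 big1 // => z /and3P [vz Bz /eqP].
  rewrite zi_val //; case: ifP => sg; first by move=> e; case: jE.
  case: (charJ HK vz Bz (negbT sg)) => _ ziK e; move: jK; rewrite -e; lia.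
subst j.
have -> : \sum_(z | valid_alloc z && (zminus_is i w z && (zi_cluster i z == K))) W z
   = \sum_(z in [set zM i w m | m : 'I_K.+1]) W z.
  apply: eq_bigl => z /=; apply/idP/imsetP.
    case/and3P => vz Bz /eqP; rewrite zi_val //.
    case: ifP => sg; last first.
      case: (charJ HK vz Bz (negbT sg)) => _ ziK e; move: ziK; rewrite e ltnn.
      by [].
    case: (charM HK vz Bz sg) => ez zK _.
    by exists (Ordinal (zK : (z i < K.+1)%N)).
  case=> m _ ->; have mK : (m <= K)%N by rewrite -ltnS.
  case: (zM_props HK mK) => v _ _ b e.
  by rewrite v b e eqxx.
rewrite big_imset /=; last first.
  move=> a b _ _ e; apply: val_inj.
  have := congr1 (fun f : alloc n => (f i : nat)) e => /=.
  by rewrite !zM_val // ?eqxx // -ltnS.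
rewrite (eq_bigr (fun _ => Abase r p i w * (nb_gamma r p * r * p))); last first.
  by move=> m _; rewrite W_zM // -ltnS.
by rewrite sumr_const card_ord -mulr_natr; ring.
Qed.

End Main.

Theorem mainTheorem6 (R : realType) (r p : R) (hr : 0 < r)
    (hp0 : 0 < p) (hp1 : p < 1) (n : nat) (i : 'I_n) (w : 'I_n -> nat) :
  let mu := ztnb r p in
  let B := zminus_is i w in
  let K := Kminus i w in
  0 < esc_prob mu B ->
  exists c : R, forall j : nat,
    esc_prob mu (fun z => B z && (zi_cluster i z == j)) / esc_prob mu B =
    c * (if (j < K)%N then (Sminus i w j)%:R + r
         else if j == K then (K.+1)%:R * nb_gamma r p * r
         else 0).
Proof.
move=> mu B K; rewrite {}/mu {}/B {}/K => Hpos.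
case: (pickP (fun z : alloc n => valid_alloc z && zminus_is i w z)) => [z0 | none].
  case/andP => v0 b0.
  have HK := goodK v0 b0.
  exists (Abase r p i w * p / (\sum_(z' : alloc n) esc_weight (ztnb r p) z')
           / esc_prob (ztnb r p) (zminus_is i w)) => j.
  rewrite probE main_sum //; ring.
move: Hpos; rewrite probE sum_valid big_pred0 ?mul0r ?ltxx //.
Qed.
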